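(* Let $L\ge1$, $S_0>0$, $N_0\ge0$, and for $l=1,\dots,L$ let $S_l,N_l\ge 0$ and constants $A_l>0$, $B_l,C_l,\xi_l\ge 0$ satisfy $S_l\ge A_lS_{l-1}$ and $N_l\le B_lN_{l-1}+C_lS_{l-1}+\xi_l$. Let $D$ be a finite set of documents, $D^+\subseteq D$ a nonempty gold set, $S_D:D\to[0,\infty)$ a document score function, and $P_k$ a set of $k$ documents with the largest scores (ties arbitrary). Fix $0<\rho\le\rho_A$, put $m_\rho=\lceil\rho|D^+|\rceil$, let $\tau_\rho^+$ be the $m_\rho$-th largest gold score, $\mathcal B_\rho=\min\{k:|P_k\cap D^+|\ge m_\rho\}$ and $M_L^-=\sum_{d\in D\setminus D^+}S_D(d)$. Assume there are constants $K_A\ge0$, $\zeta_A\ge0$, $c_\rho\in(0,1]$ with $$M_L^-\le K_AN_L+\zeta_A,\qquad \tau_\rho^+\ge\frac{c_\rho}{m_\rho}S_L .$$ Then $$\mathcal B_\rho\le m_\rho+\frac{m_\rho K_A}{c_\rho}\operatorname{SNR}_L^{-1}+\frac{m_\rho\zeta_A}{c_\rho S_L},$$ and consequently $$\mathcal B_\rho\le m_\rho+\frac{m_\rho K_A}{c_\rho}\Big[\Big(\prod_{l=1}^{L}\frac{B_l}{A_l}\Big)\operatorname{SNR}_0^{-1}+\sum_{i=1}^{L}\Big(\frac{C_i}{A_i}+\frac{\xi_i}{A_iS_{i-1}}\Big)\prod_{t=i+1}^{L}\frac{B_t}{A_t}\Big]+\frac{m_\rho\zeta_A}{c_\rho S_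L}.$$
   Context: $\operatorname{SNR}_l=S_l/N_l$ ($+\infty$ if $N_l=0$), $\operatorname{SNR}_l^{-1}=N_l/S_l$; empty products equal $1$. In the paper $S_l,N_l$ are entity-level evidence-signal and noise masses at layer $l$ of a graph reader, and document scores come from entity-to-document projection. $\rho_A\in[0,1]$ is the anchor coverage: given an entity set $R_q$ (recoverable evidence region) and anchor sets $A(d)$ of entities for documents $d$, $\rho_A=|\{d\in D^+:A(d)\cap R_q\neq\varnothing\}|/|D^+|$. *)

(* Defs.v *)
From HB Require Import structures.
From mathcomp Require Import all_boot all_order all_algebra.
From mathcomp Require Import reals.
Set Implicit Arguments. Unset Strict Implicit. Unset Printing Implicit Defensive.
Import Order.TTheory GRing.Theory Num.Theory.
Local Open Scope ring_scope.

Definition SNRinv (R : realType) (S N : R) : R := N / S.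

Definition anchor_coverage (R : realType) (T E : finType)
  (Dp : {set T}) (Anch : T -> {set E}) (Rq : {set E}) : R :=
  #|[set d in Dp | Anch d :&: Rq != set0]|%:R / #|Dp|%:R.

Definition m_rho (R : realType) (T : finType) (rho : R) (Dp : {set T}) : nat :=
  `|Num.ceil (rho * #|Dp|%:R)|%N.

Definition topk_family (R : realType) (T : finType) (D : {set T})
  (SD : T -> R) (P : nat -> {set T}) : Prop :=
  forall k, (k <= #|D|)%N ->
    [/\ P k \subset D, #|P k| = k &
        forall x y, x \in P k -> y \in D :\: P k -> SD y <= SD x].

Definition tau_plus (R : realType) (T : finType) (SD : T -> R)
  (Dp : {set T}) (m : nat) : R :=
  nth 0 (sort (fun a b : R => b <= a) [seq SD d | d <- enum Dp]) m.-1.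

Definition B_rho (T : finType) (D Dp : {set T}) (P : nat -> {set T})
  (m : nat) : nat :=
  find (fun k => (m <= #|P k :&: Dp|)%N) (iota 0 #|D|.+1).

Definition M_minus (R : realType) (T : finType) (D Dp : {set T})
  (SD : T -> R) : R := \sum_(d in D :\: Dp) SD d.

(* Main.v *)
Require Import Defs.
From HB Require Import structures.
From mathcomp Require Import all_boot all_order all_algebra.
From mathcomp Require Import reals ring lra zify.
Import Order.TTheory GRing.Theory Num.Theory.
Local Open Scope ring_scope.

Lemma gold_count (R : realType) (T : finType) (SD : T -> R) (Dp : {set T}) (m : nat) (tau : R) :
  (0 < m)%N -> (m <= #|Dp|)%N ->
  tau = nth 0 (sort (fun a b : R => b <= a) [seq SD d | d <- enum Dp]) m.-1 ->
  (m <= #|[set d in Dp | (tau <= SD d)%R]|)%N.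
Proof.
move=> m0 mD ->.
set s := sort _ _.
have ss : size s = #|Dp| by rewrite size_sort size_map -cardE.
have srt : sorted (fun a b : R => b <= a) s.
  by apply: sort_sorted => a b; exact: le_total.
set tau' := nth 0 s m.-1.
have H1 : (m <= count (fun x => (tau' <= x)%R) s)%N.
  rewrite -(cat_take_drop m s) count_cat.
  have sz : size (take m s) = m.
    by rewrite size_take ss; case: ltnP => // h; apply/eqP; rewrite eqn_leq mD h.
  have Hall : all (fun x => (tau' <= x)%R) (take m s).
    apply/(all_nthP 0) => i; rewrite sz => im.
    rewrite nth_take //.
    have tr : transitive (fun a b : R => b <= a).
      by move=> a b c hab hbc; exact: le_trans hbc hab.
    have rf : reflexive (fun a b : R => b <= a) by move=> a.
    apply: (sorted_leq_nth tr rf 0 srt); rewrite ?inE ?ss.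
    - exact: leq_trans im mD.
    - by case: (m) m0 mD => //= n _ h; exact: leq_trans (ltnSn n) h.
    - by case: (m) im m0 => //.
  move: Hall; rewrite all_count sz => /eqP ->.
  exact: leq_addr.
apply: (leq_trans H1).
have pe : perm_eq s [seq SD d | d <- enum Dp] by rewrite /s perm_sort perm_refl.
rewrite (permP pe) count_map -size_filter.
rewrite -(card_uniqP _); last by apply: filter_uniq; exact: enum_uniq.
apply: subset_leq_card; apply/subsetP => x.
by rewrite mem_filter mem_enum inE /= => /andP[-> ->].
Qed.
Lemma S_pos (R : realType) (L : nat) (S A : nat -> R) :
  0 < S 0 -> (forall l, (1 <= l <= L)%N -> 0 < A l) ->
  (forall l, (1 <= l <= L)%N -> A l * S l.-1 <= S l) ->
  forall n, (n <= L)%N -> 0 < S n.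
Proof.
move=> S0 Ap AS; elim=> // n IH hn.
have h : (1 <= n.+1 <= L)%N by rewrite hn.
apply: lt_le_trans (AS _ h); apply: mulr_gt0; first exact: Ap.
by apply: IH; exact: ltnW.
Qed.

Lemma ratio_rec (R : realType) (L : nat) (S N A B C xi : nat -> R) :
  0 < S 0 ->
  (forall l, (1 <= l <= L)%N ->
     [/\ 0 <= S l, 0 <= N l, 0 < A l & [/\ 0 <= B l, 0 <= C l & 0 <= xi l]]) ->
  (forall l, (1 <= l <= L)%N -> A l * S l.-1 <= S l) ->
  (forall l, (1 <= l <= L)%N -> N l <= B l * N l.-1 + C l * S l.-1 + xi l) ->
  forall n, (n <= L)%N ->
  N n / S n <= (\prod_(1 <= l < n.+1) (B l / A l)) * (N 0 / S 0)
          + \sum_(1 <= i < n.+1)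
              ((C i / A i + xi i / (A i * S i.-1))
               * \prod_(i.+1 <= t < n.+1) (B t / A t)).
Proof.
move=> S0 hyp AS NB.
have Ap : forall l, (1 <= l <= L)%N -> 0 < A l by move=> l /hyp[].
have Sp := @S_pos _ L S A S0 Ap AS.
elim=> [|n IH] hn.
  by rewrite !big_geq // mul1r addr0.
have h : (1 <= n.+1 <= L)%N by rewrite hn.
have [_ Nn1 An [Bn Cn xin]] := hyp _ h.
have Sn : 0 < S n by apply: Sp; exact: ltnW.
have Sn1 : 0 < S n.+1 by apply: Sp.
have step : N n.+1 / S n.+1 <= B n.+1 / A n.+1 * (N n / S n)
            + (C n.+1 / A n.+1 + xi n.+1 / (A n.+1 * S n)).
  apply: (@le_trans _ _ (N n.+1 / (A n.+1 * S n))).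
    apply: ler_wpM2l => //; rewrite lef_pV2 ?posrE ?mulr_gt0 //.
    exact: (AS _ h).
  apply: (@le_trans _ _ ((B n.+1 * N n + C n.+1 * S n + xi n.+1) / (A n.+1 * S n))).
    by apply: ler_wpM2r; [rewrite invr_ge0 ltW // mulr_gt0 | exact: (NB _ h)].
  rewrite le_eqVlt; apply/orP; left; apply/eqP.
  field; apply/andP; split; rewrite gt_eqF //.
apply: (le_trans step).
rewrite big_nat_recr //= [X in _ <= _ + X]big_nat_recr //=.
rewrite (@big_geq _ _ _ n.+2 n.+2) // mulr1 [X in _ <= X]addrA lerD2r.
apply: (@le_trans _ _ (B n.+1 / A n.+1 * (\prod_(1 <= l < n.+1) (B l / A l) * (N 0 / S 0) +
       \sum_(1 <= i < n.+1) ((C i / A i + xi i / (A i * S i.-1)) * \prod_(i.+1 <= t < n.+1) (B t / A t))))).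
  apply: ler_wpM2l; last exact: IH (ltnW hn).
  by rewrite divr_ge0 // ltW.
rewrite mulrDr lerD ?le_refl //.
  by rewrite mulrA (mulrC (B n.+1 / A n.+1)).
rewrite mulr_sumr le_eqVlt; apply/orP; left; apply/eqP; apply: eq_big_nat => i /andP[i1 i2].
by rewrite (big_nat_recr _ _ _ i2) /=; ring.
Qed.
Lemma comb (R : realType) (T : finType) (D Dp : {set T}) (SD : T -> R)
  (P : nat -> {set T}) (m : nat) (tau : R) :
  Dp \subset D -> topk_family D SD P ->
  (m <= #|[set d in Dp | (tau <= SD d)%R]|)%N ->
  (B_rho D Dp P m <= m + #|[set d in D :\: Dp | (tau <= SD d)%R]|)%N.
Proof.
move=> DpD Ptop mG.
set G := [set d in Dp | _] in mG *.
set H := [set d in D :\: Dp | _].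
set k := (m + #|H|)%N.
have kD : (k <= #|D|)%N.
  rewrite -(cardsID Dp D).
  apply: (leq_trans (leq_add mG (leqnn _))); apply: leq_add; apply: subset_leq_card;
    apply/subsetP => x; rewrite !inE.
    by case/andP => xD _; rewrite xD (subsetP DpD).
  by case/andP => ->.
have [Psub Pcard Pmax] := Ptop k kD.
have cov : (m <= #|P k :&: Dp|)%N.
  rewrite leqNgt; apply/negP => lt.
  have hlt : (#|H| < #|P k :\: Dp|)%N.
    have ek : k = (m + #|H|)%N by [].
    have := cardsID Dp (P k); rewrite Pcard; lia.
  have /subsetPn [z zP zH] : ~~ (P k :\: Dp \subset H).
    by apply/negP => /subset_leq_card; rewrite leqNgt hlt.
  have zD : z \in D :\: Dp.
    by move: zP; rewrite !inE => /andP[-> /(subsetP Psub) ->].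
  have ltz : SD z < tau by move: zH; rewrite inE zD /= ltNge.
  have : (#|G| <= #|P k :&: Dp|)%N.
    apply: subset_leq_card; apply/subsetP => x; rewrite !inE => /andP[xDp tx].
    rewrite xDp andbT; apply/negPn/negP => xP.
    have xD : x \in D :\: P k by rewrite !inE xP (subsetP DpD).
    have zPk : z \in P k by move: zP; rewrite inE => /andP[].
    have := Pmax _ _ zPk xD => h.
    by move: (le_lt_trans h ltz); rewrite ltNge tx.
  lia.
rewrite leqNgt; apply/negP => /(before_find 0%N).
by rewrite nth_iota ?ltnS // add0n cov.
Qed.
Theorem theorem1p13 (R : realType) (L : nat) (S N A B C xi : nat -> R)
  (T E : finType) (D Dp : {set T}) (SD : T -> R) (P : nat -> {set T})
  (Anch : T -> {set E}) (Rq : {set E})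
  (rho KA zetaA c : R) :
  (1 <= L)%N ->
  0 < S 0 -> 0 <= N 0 ->
  (forall l, (1 <= l <= L)%N ->
     [/\ 0 <= S l, 0 <= N l, 0 < A l & [/\ 0 <= B l, 0 <= C l & 0 <= xi l]]) ->
  (forall l, (1 <= l <= L)%N -> A l * S l.-1 <= S l) ->
  (forall l, (1 <= l <= L)%N -> N l <= B l * N l.-1 + C l * S l.-1 + xi l) ->
  Dp \subset D -> Dp != set0 ->
  (forall d, d \in D -> 0 <= SD d) ->
  topk_family D SD P ->
  0 < rho -> rho <= anchor_coverage R Dp Anch Rq ->
  0 <= KA -> 0 <= zetaA -> 0 < c -> c <= 1 ->
  let m := m_rho rho Dp in
  M_minus D Dp SD <= KA * N L + zetaA ->
  c / m%:R * S L <= tau_plus SD Dp m ->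
  (B_rho D Dp P m)%:R
    <= m%:R + m%:R * KA / c * SNRinv (S L) (N L) + m%:R * zetaA / (c * S L)
  /\
  (B_rho D Dp P m)%:R
    <= m%:R + m%:R * KA / c *
         ((\prod_(1 <= l < L.+1) (B l / A l)) * SNRinv (S 0) (N 0)
          + \sum_(1 <= i < L.+1)
              ((C i / A i + xi i / (A i * S i.-1))
               * \prod_(i.+1 <= t < L.+1) (B t / A t)))
       + m%:R * zetaA / (c * S L).

Proof.
move=> L1 S0 N0 hyp AS NB DpD Dpn SDp Ptop rho0 rhoA KA0 z0 c0 c1 m Mle taule.
have Ap : forall l, (1 <= l <= L)%N -> 0 < A l by move=> l /hyp[].
have SL : 0 < S L := @S_pos _ L S A S0 Ap AS L (leqnn L).
have Dp0 : (0 < #|Dp|)%N by rewrite card_gt0.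
have cov1 : anchor_coverage R Dp Anch Rq <= 1.
  rewrite /anchor_coverage ler_pdivrMr ?ltr0n // mul1r ler_nat.
  by apply: subset_leq_card; apply/subsetP => x; rewrite inE => /andP[].
set x := rho * #|Dp|%:R.
have x0 : 0 < x by rewrite mulr_gt0 ?ltr0n.
have x1 : x <= #|Dp|%:R.
  by rewrite /x -[X in _ <= X]mul1r ler_wpM2r ?ler0n // (le_trans rhoA cov1).
have cpos : 0 < Num.ceil x by rewrite ceil_gt0.
have em : (m%:Z = Num.ceil x) by rewrite /m /m_rho gez0_abs // ltW.
have m0 : (0 < m)%N by rewrite -(ltz_nat 0) em.
have mD : (m <= #|Dp|)%N by rewrite -lez_nat em ceil_le_int.
have mR : 0 < m%:R :> R by rewrite ltr0n.
set tau := tau_plus SD Dp m in taule.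
have tau_pos : 0 < tau.
  by apply: lt_le_trans taule; rewrite mulr_gt0 // divr_gt0.
have mG := @gold_count R T SD Dp m tau m0 mD erefl.
have hB := @comb R T D Dp SD P m tau DpD Ptop mG.
set H := [set d in D :\: Dp | _] in hB.
have hM : #|H|%:R * tau <= M_minus D Dp SD.
  rewrite /M_minus (big_setID H) /= (setIidPr _); last first.
    by apply/subsetP => d; rewrite inE => /andP[].
  rewrite -[X in X <= _]addr0; apply: lerD.
    rewrite mulr_natl -sumr_const; apply: ler_sum => d; rewrite inE => /andP[].
    by [].
  by apply: sumr_ge0 => d /setDP[/setDP[dD _] _]; exact: SDp.
have hfirst : (B_rho D Dp P m)%:R <= m%:R + #|H|%:R :> R by rewrite -natrD ler_nat.
have hH : #|H|%:R <= m%:R * KA / c * SNRinv (S L) (N L) + m%:R * zetaA / (c * S L).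
  have -> : m%:R * KA / c * SNRinv (S L) (N L) + m%:R * zetaA / (c * S L)
      = (KA * N L + zetaA) / (c / m%:R * S L).
    rewrite /SNRinv; field.
    by rewrite gt_eqF // gt_eqF // gt_eqF.
  rewrite ler_pdivlMr; last by rewrite mulr_gt0 // divr_gt0.
  apply: le_trans Mle; apply: le_trans hM.
  by apply: ler_wpM2l; rewrite ?ler0n.
have first : (B_rho D Dp P m)%:R
    <= m%:R + m%:R * KA / c * SNRinv (S L) (N L) + m%:R * zetaA / (c * S L).
  by apply: le_trans hfirst _; rewrite -addrA lerD2l.
split => //.
apply: le_trans first _; rewrite lerD2r lerD2l.
apply: ler_wpM2l; first by rewrite divr_ge0 ?mulr_ge0 ?ler0n // ltW.
rewrite /SNRinv.
exact: (@ratio_rec R L S N A B C xi S0 hyp AS NB L (leqnn L)).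
Qed.
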